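(* Let $T$ be a non-star tree and $x$ a vertex of $T$ with neighbors $x_1,\dots,x_n$, $n>2$. Suppose that for $i=1,\dots,m$, where $2\le m<n$, the tree $T_{(x_i,x)}$ is a neighbor $F$-tree of $x$. Let $T'$ be the connected component containing $x$ in $T-\{xx_i: i=1,\dots,m\}$. Suppose there exists a $(T',z)$-good 2-placement $\sigma$ with $dist(x,\sigma(x))\le 2$, where $z$ is a vertex of $T'$ (possibly $z=x$). Then there exists a $(T,z)$-good 2-placement $\sigma_z$ such that $\sigma_z(v)=\sigma(v)$ for every $v\in V(T')$ and $dist_T(x_i,\sigma_z(x_i))\le 2$ for $i=1,\dots,m$.
   Context: All graphs are finite, simple and undirected. A non-star tree is a tree not isomorphic to a star $K_{1,m}$ for any $m\ge0$. For an edge $ab$ of a tree $T$, $T_{(a,b)}$ denotes the connected component containing $a$ in $T-\{ab\}$; it is a neighbor $F$-tree of $b$ if it is a path with at most $3$ vertices and, when it has exactly $3$ vertices, $a$ is an end vertex of it. For a tree $S$, a permutation $\sigma$ of $V(S)$ is a 2-placement of $S$ if $\sigma(a)\sigma(b)\notin E(S)$ for every edge $ab\in E(S)$; $\sigma(S)\subseteq S^k$ means $dist_S(\sigma(a),\sigma(b))\le k$ for every edge $ab$ of $S$. For a non-star tree $S$ and vertex $w$, a fixed-point-free permutation $\sigma$ of $V(S)$ is an $(S,w)$-good 2-placement if (distances and degrees taken in $S$): (1) $\sigma$ is a 2-placement of $S$; (2) $\sigma(S)\subseteq S^5$; (3) $dist(w,\sigma(w))=1$; (4) $dist(y,\sigma(y))\le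 2$ for every neighbor $y$ of $w$; (5) $dist(y,\sigma(y))\le 4$ for every $y$ of degree $1$. *)

(* Defs.v *)
(* Graphs: a simple graph is a symmetric irreflexive
   relation e on a finite vertex type V.  Subgraphs are represented by a
   vertex set A : {set V} with the induced edge relation. *)
From mathcomp Require Import all_boot.
Set Implicit Arguments. Unset Strict Implicit. Unset Printing Implicit Defensive.

Section Defs.
Variable V : finType.
Variable e : rel V.

Definition eA (A : {set V}) : rel V :=
  fun u v => [&& u \in A, v \in A & e u v].

Definition dist_le (A : {set V}) (k : nat) (u v : V) : Prop :=
  exists p : seq V, [&& u \in A, path (eA A) u p, last u p == v & size p <= k].

Definition dist_eq (A : {set V}) (k : nat) (u v : V) : Prop :=
  dist_le A k u v /\ forall j, j < k -> ~ dist_le A j u v.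

Definition deg (A : {set V}) (v : V) : nat := #|[set y | eA A v y]|.

Definition is_connected (A : {set V}) : Prop :=
  forall u v, u \in A -> v \in A -> connect (eA A) u v.

Definition has_cycle (A : {set V}) : Prop :=
  exists c : seq V, [/\ uniq c, 3 <= size c & cycle (eA A) c].

Definition is_tree (A : {set V}) : Prop :=
  A != set0 /\ is_connected A /\ ~ has_cycle A.

(* isomorphic to K_{1,m} for some m >= 0 *)
Definition is_star (A : {set V}) : Prop :=
  exists2 c, c \in A &
    (forall v, v \in A -> v != c -> eA A c v) /\
    (forall u v, eA A u v -> (u == c) || (v == c)).

Definition consec (s : seq V) (u v : V) : Prop :=
  exists i, [/\ i.+1 < size s, nth u s i = u & nth u s i.+1 = v].

(* s lists the vertices of the path graph induced on A in path order *)
Definition is_path_seq (A : {set V}) (s : seq V) : Prop :=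
  [/\ s != [::], uniq s, A =i s &
      forall u v, eA A u v <-> (consec s u v \/ consec s v u)].

(* T_{(a,b)} for the tree on A: component containing a in A - {ab} *)
Definition comp_del (A : {set V}) (a b : V) : {set V} :=
  [set v | connect (fun u w => eA A u w &&
             ~~ (((u == a) && (w == b)) || ((u == b) && (w == a)))) a v].

Definition neighbor_Ftree (A : {set V}) (a b : V) : Prop :=
  exists s, [/\ is_path_seq (comp_del A a b) s, size s <= 3 &
              (size s = 3 -> a = head a s \/ a = last a s)].

(* component containing x in A - {x y : y \in X} *)
Definition comp_del_star (A : {set V}) (x : V) (X : {set V}) : {set V} :=
  [set v | connect (fun u w => eA A u w &&
             ~~ (((u == x) && (w \in X)) || ((w == x) && (u \in X)))) x v].

Definition good (A : {set V}) (w : V) (sigma : V -> V) : Prop :=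
  [/\ is_tree A, ~ is_star A, w \in A,
      [/\ {in A, forall v, sigma v \in A}, {in A &, injective sigma}
        & {in A, forall v, sigma v != v}] &
      [/\
          (forall a b, eA A a b -> ~~ eA A (sigma a) (sigma b)),
          (forall a b, eA A a b -> dist_le A 5 (sigma a) (sigma b)),
          dist_eq A 1 w (sigma w),
          (forall y, eA A w y -> dist_le A 2 y (sigma y)) &
          (forall y, y \in A -> deg A y = 1 -> dist_le A 4 y (sigma y))]].

End Defs.

(* Main.v *)
Require Import Defs.
From mathcomp Require Import all_boot.
Set Implicit Arguments. Unset Strict Implicit. Unset Printing Implicit Defensive.

From Stdlib Require Import ClassicalEpsilon.
Section Aux.
Variable V : finType.
Variable e : rel V.
Implicit Types A B : {set V}.
Hypothesis e_sym : symmetric e.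
Hypothesis e_irr : irreflexive e.

Lemma dl0 A u : u \in A -> dist_le e A 0 u u.
Proof. by move=> uA; exists [::]; rewrite uA /= eqxx. Qed.

Lemma dl1 A u v : eA e A u v -> dist_le e A 1 u v.
Proof.
move=> h; exists [:: v]; have /and3P[-> _ _] := h.
by rewrite /= h eqxx.
Qed.

Lemma dl_trans A j k u v w :
  dist_le e A j u v -> dist_le e A k v w -> dist_le e A (j + k) u w.
Proof.
case=> p /and4P[uA pp /eqP lp sp]; case=> q /and4P[vA pq /eqP lq sq].
exists (p ++ q); rewrite uA cat_path pp lp pq last_cat lp lq eqxx size_cat /=.
exact: leq_add.
Qed.

Lemma dl_mono A j k u v : j <= k -> dist_le e A j u v -> dist_le e A k u v.
Proof.
move=> jk [p /and4P[uA pp lp sp]]; exists p; rewrite uA pp lp /=.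
exact: leq_trans jk.
Qed.

Lemma dl_sub A B k u v : A \subset B -> dist_le e A k u v -> dist_le e B k u v.
Proof.
move=> /subsetP AB [p /and4P[uA pp lp sp]]; exists p; rewrite (AB _ uA) lp sp /= andbT.
apply: sub_path pp => a b /and3P[aA bA ab]; by rewrite /eA (AB _ aA) (AB _ bA).
Qed.

Lemma eA_sym A : symmetric (eA e A).
Proof. by move=> a b; rewrite /eA e_sym andbCA. Qed.

Lemma dl_sym A k u v : dist_le e A k u v -> dist_le e A k v u.
Proof.
case=> p /and4P[uA pp /eqP lp sp]; apply: (dl_mono sp); rewrite -lp.
elim: p u uA pp {lp sp} => [|a p IH] u uA /=; first by move=> _; exact: dl0.
move=> /andP[ua pp]; have aA : a \in A by move: ua => /and3P[].
have := dl_trans (IH a aA pp) (dl1 (_ : eA e A a u)).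
by rewrite addn1; apply; rewrite eA_sym.
Qed.

Lemma dl0_eq A u v : dist_le e A 0 u v -> u = v.
Proof. by case=> [[|a p]] /and4P[_ _ /eqP h s]. Qed.

Lemma FC (R : rel V) (P : pred V) a b :
  connect R a b -> (forall u w, R u w -> P u -> P w) -> P a -> P b.
Proof.
move=> /connectP[p pth ->] cl; elim: p a pth => [|c p IH] a //= /andP[ac pth] Pa.
exact: (IH c pth (cl _ _ ac Pa)).
Qed.

Lemma next_neq (p : seq V) y : uniq p -> 1 < size p -> y \in p -> next p y != y.
Proof.
rewrite next_nth; case: p => [|a q] //= /andP[aq uq] sq yp; rewrite yp.
have [->|ya] := eqVneq y a.
  case: q aq uq sq {yp} => [|b q] //=; rewrite inE negb_or => /andP[ab _] _ _.
  by rewrite eq_sym.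
have yq : y \in q by move: yp; rewrite inE (negbTE ya).
have [lt|ge] := ltnP (index y q).+1 (size q).
  rewrite -{2}(nth_index a yq) nth_uniq //; first by rewrite eqn_leq ltnn.
  by rewrite index_mem.
by rewrite nth_default // eq_sym.
Qed.

End Aux.

Unset Implicit Arguments.

Theorem corollary3p1 (V : finType) (e : rel V)
  (e_sym : symmetric e) (e_irr : irreflexive e)
  (Htree : is_tree e [set: V]) (Hnonstar : ~ is_star e [set: V])
  (x : V) (X : {set V})
  (Hn : 2 < deg e [set: V] x)
  (HXnb : forall xi, xi \in X -> e x xi)
  (Hm : 2 <= #|X| < deg e [set: V] x)
  (HF : forall xi, xi \in X -> neighbor_Ftree e [set: V] xi x)
  (z : V) (Hz : z \in comp_del_star e [set: V] x X)
  (sigma : V -> V)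
  (Hgood : good e (comp_del_star e [set: V] x X) z sigma)
  (Hx : dist_le e (comp_del_star e [set: V] x X) 2 x (sigma x)) :
  exists sigma_z : V -> V,
    [/\ good e [set: V] z sigma_z,
        {in comp_del_star e [set: V] x X, forall v, sigma_z v = sigma v} &
        forall xi, xi \in X -> dist_le e [set: V] 2 xi (sigma_z xi)].
Proof.
set T' := comp_del_star e [set: V] x X.
have eAT : forall u v, eA e [set: V] u v = e u v by move=> u v; rewrite /eA !inE.
have E1 : forall u v, e u v -> dist_le e [set: V] 1 u v.
  by move=> u v uv; apply: dl1; rewrite eAT.
have Good := Hgood.
case: Hgood => _ _ zT' [sT' sinj sfp] [s1 s2 s3 s4 s5].
have xT' : x \in T' by rewrite inE connect0.
have xX : x \notin X by apply/negP => /HXnb; rewrite e_irr.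
have F2 : forall u w, u \in T' -> e u w -> w \in T' \/ (u = x /\ w \in X).
  move=> u w; rewrite !inE => cu uw.
  case: (boolP ((u == x) && (w \in X))) => [/andP[/eqP -> ->]|h1]; first by right.
  case: (boolP ((w == x) && (u \in X))) => [/andP[/eqP -> _]|h2].
    by left; rewrite connect0.
  left; apply: connect_trans cu (connect1 _); by rewrite /= eAT uw /= negb_or h1 h2.
pose C xi := comp_del e [set: V] xi x.
have F3' : forall xi, xi \in C xi by move=> xi; rewrite inE connect0.
have F3 : forall xi v w, v \in C xi -> e v w -> w \in C xi \/ (v = xi /\ w = x).
  move=> xi v w; rewrite !inE => cu uw.
  case: (boolP ((v == xi) && (w == x))) => [/andP[/eqP vx /eqP wx]|h1]; first by right.
  case: (boolP ((v == x) && (w == xi))) => [/andP[_ /eqP wx]|h2].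
    by left; rewrite wx connect0.
  left; apply: connect_trans cu (connect1 _); by rewrite /= eAT uw /= negb_or h1 h2.
have F4 : forall xi, xi \in X -> x \notin C xi.
  move=> xi xiX; apply/negP => xC.
  have [s [[_ us Cs _] ss _]] := HF xi xiX.
  have cC : #|C xi| = size s by rewrite (eq_card Cs); apply/card_uniqP.
  have sub : x |: [set y | eA e [set: V] x y] \subset C xi.
    apply/subsetP => y; rewrite in_setU1 inE eAT => /orP[/eqP -> //|xy].
    case: (F3 _ _ _ xC xy) => // [[xxi _]].
    by move: (HXnb _ xiX); rewrite -xxi e_irr.
  have := subset_leq_card sub; rewrite cardsU1 cC inE eAT e_irr /=.
  rewrite -/(deg e [set: V] x) => h.
  by move: (leq_trans h ss); rewrite add1n ltnS leqNgt Hn.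
have F5 : forall xi v, xi \in X -> v \in C xi -> v \notin T'.
  move=> xi v xiX vC; apply/negP; rewrite inE => cv.
  suff: v \notin C xi by rewrite vC.
  apply: (FC (P := [pred w | w \notin C xi]) cv); last exact: F4.
  move=> u w /andP[uw nR]; apply: contra => wC.
  case: (F3 _ _ _ wC (_ : e w u)); first by rewrite e_sym; move: uw; rewrite eAT.
    by [].
  by case=> wxi ux; move: nR; rewrite wxi ux xiX eqxx.
have F6 : forall xi xj v, xi \in X -> xj \in X -> v \in C xi -> v \in C xj -> xi = xj.
  move=> xi xj v xiX xjX vi; rewrite inE => cv; apply/eqP; apply/negPn/negP => nij.
  suff: (v \notin C xi) && (v \in C xj) by rewrite vi.
  apply: (FC (P := [pred w | (w \notin C xi) && (w \in C xj)]) cv); last first.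
    rewrite /= F3' andbT; apply/negP => xjC.
    case: (F3 _ _ _ xjC (_ : e xj x)); first by rewrite e_sym HXnb.
      by move/negP: (F4 _ xiX).
    by case=> xx; rewrite xx eqxx in nij.
  move=> u w uw /andP[uC uCj].
  have wCj : w \in C xj. move: uCj; rewrite !inE => uCj. by apply: (connect_trans uCj); apply: connect1.
  rewrite /= wCj andbT; apply/negP => wC.
  move: uw => /andP[uw _]; rewrite eAT in uw.
  case: (F3 _ _ _ wC (_ : e w u)); first by rewrite e_sym.
    by rewrite (negbTE uC).
  by case=> _ ux; move: uCj; rewrite ux (negbTE (F4 _ xjX)).
have F7 : forall v, v \in T' \/ exists2 xi, xi \in X & v \in C xi.
  move=> v; case: Htree => _ [conn _].
  suff: (v \in T') || [exists xi, (xi \in X) && (v \in C xi)].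
    by case/orP => [->|/existsP[xi /andP[xiX vC]]]; [left | right; exists xi].
  apply: (FC (P := [pred w | (w \in T') || [exists xi, (xi \in X) && (w \in C xi)]])
     (conn x v (in_setT _) (in_setT _))); last by rewrite /= xT'.
  move=> u w; rewrite /= eAT => uw /orP[uT|/existsP[xi /andP[xiX uC]]].
    case: (F2 _ _ uT uw) => [-> //|[_ wX]].
    by apply/orP; right; apply/existsP; exists w; rewrite wX F3'.
  case: (F3 _ _ _ uC uw) => [wC|[_ ->]]; last by rewrite xT'.
  by apply/orP; right; apply/existsP; exists xi; rewrite xiX wC.
pose BR xi (b : seq V) := [/\ uniq b, C xi =i b &
   match b with
   | [:: a] => a = xi
   | [:: a; c] => a = xi /\ e a c
   | [:: a; c; d] => [/\ a = xi, e a c, e c d & ~~ e a d]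
   | _ => False end].
have HBR : forall xi, xi \in X -> exists b, BR xi b.
  move=> xi xiX; have [s [Ps ss hs3]] := HF xi xiX; case: Ps => sn us Cs es.
  have xis : xi \in s by rewrite -Cs F3'.
  have eS1 : forall u v, consec s u v -> e u v.
    by move=> u v c; have /and3P[_ _ ->] := proj2 (es u v) (or_introl c).
  have eS2 : forall u v, u \in s -> v \in s -> e u v -> consec s u v \/ consec s v u.
    by move=> u v us' vs uv; apply: (proj1 (es u v)); rewrite /eA !Cs us' vs uv.
  case: s sn us Cs es ss hs3 xis eS1 eS2 => [|a [|c [|d [|f s]]]] //= _ us Cs _ _ hs3 xis eS1 eS2.
  - exists [:: a]; split => //; by move: xis; rewrite inE => /eqP.
  - move: xis; rewrite !inE => /orP[/eqP xa|/eqP xc].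
      exists [:: a; c]; split => //; split => //; apply: eS1; by exists 0.
    exists [:: c; a]; split => //.
    + by move: us; rewrite /= !inE !andbT eq_sym.
    + by move=> v; rewrite Cs !inE orbC.
    + by split => //; rewrite e_sym; apply: eS1; exists 0.
  - have eac : e a c by apply: eS1; exists 0.
    have ecd : e c d by apply: eS1; exists 1.
    move: (us); rewrite /= !inE !negb_or !andbT => /andP[/andP[ac ad] cd].
    have nad : ~~ e a d.
      apply/negP => ad'; case: (eS2 a d _ _ ad'); rewrite ?inE ?eqxx ?orbT //.
        by case=> [[|[|i]]] [//= _ h1 h2]; subst; rewrite ?eqxx in ac ad cd.
      by case=> [[|[|i]]] [//= _ h1 h2]; subst; rewrite ?eqxx in ac ad cd.
    case: (hs3 erefl) => /= xe.
      by exists [:: a; c; d]; split => //; rewrite /= !inE !negb_or ac ad cd.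
    exists [:: d; c; a]; split => //.
    + by rewrite /= !inE !negb_or !andbT eq_sym cd eq_sym ad eq_sym ac.
    + by move=> v; rewrite Cs !inE; case: (v == a); case: (v == c); case: (v == d).
    + by split => //; rewrite e_sym // (e_sym a).
pose bf xi := epsilon (inhabits [::]) (BR xi).
have Hbf : forall xi, xi \in X -> BR xi (bf xi).
  by move=> xi xiX; apply: epsilon_spec; exact: HBR.
pose xs := enum X.
have uxs : uniq xs := enum_uniq _.
pose nX := next xs.
have NX1 : forall xi, xi \in X -> nX xi \in X.
  by move=> xi xiX; rewrite -mem_enum mem_next mem_enum.
have NX2 : forall xi, xi \in X -> nX xi != xi.
  move=> xi xiX; apply: next_neq => //; last by rewrite mem_enum.
  by rewrite -cardE; case/andP: Hm.
have NX3 : injective nX := can_inj (prev_next uxs).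
pose f xi v := match bf xi with
  | [:: a] => nX a
  | [:: a; c] => if v == a then c else nX a
  | [:: a; c; d] => if v == a then d else if v == d then c else nX a
  | _ => v end.
pose sz v := if [pick xi in X | v \in C xi] is Some xi then f xi v else sigma v.
have SZ1 : forall v, v \in T' -> sz v = sigma v.
  move=> v vT; rewrite /sz; case: pickP => [xi /andP[xiX vC]|] //.
  by move: vT; rewrite (negbTE (F5 _ _ xiX vC)).
have SZ2 : forall xi v, xi \in X -> v \in C xi -> sz v = f xi v.
  move=> xi v xiX vC; rewrite /sz; case: pickP => [xj /andP[xjX vCj]|/(_ xi)].
    by rewrite (F6 _ _ _ xjX xiX vCj vC).
  by rewrite xiX vC.
have BL : forall xi, xi \in X ->
  [/\ forall v, v \in C xi -> [/\ sz v \notin T', sz v != v & dist_le e [set: V] 4 v (sz v)],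
      dist_le e [set: V] 2 xi (sz xi),
      forall u v, u \in C xi -> v \in C xi -> e u v ->
         ~~ e (sz u) (sz v) /\ dist_le e [set: V] 5 (sz u) (sz v),
      forall u, u \in C xi -> sz u = nX xi \/ (sz u \in C xi /\ sz u \notin X) &
      forall u v, u \in C xi -> v \in C xi -> sz u = sz v -> u = v].
  move=> xi xiX.
  have nX' : nX xi \in X := NX1 _ xiX.
  have nxi : nX xi != xi := NX2 _ xiX.
  have en : e x (nX xi) := HXnb _ nX'.
  have exi : e xi x by rewrite e_sym HXnb.
  have nC : nX xi \notin C xi.
    by apply/negP => nC; move: nxi; rewrite -(F6 _ _ _ xiX nX' nC (F3' _)) eqxx.
  have nT : nX xi \notin T' := F5 _ _ nX' (F3' _).
  have deepX : forall w, w \in C xi -> w != xi -> w \notin X.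
    move=> w wC wxi; apply/negP => wX.
    by move: wxi; rewrite (F6 _ _ _ xiX wX wC (F3' w)) eqxx.
  have deepT : forall w, w \in C xi -> w \notin T' := fun w => F5 xi w xiX.
  have deepn : forall w, w \in C xi -> w != xi -> ~~ e w (nX xi).
    move=> w wC wxi; apply/negP => wn; case: (F3 _ _ _ wC wn) => [nC'|[wx _]].
      by rewrite nC' in nC.
    by rewrite wx eqxx in wxi.
  have dxn : forall k w, dist_le e [set: V] k w xi -> dist_le e [set: V] (k + 2) w (nX xi).
    by move=> k w h; exact: dl_trans h (dl_trans (E1 _ _ exi) (E1 _ _ en)).
  have SZ : forall v, v \in C xi -> sz v = f xi v := fun v => SZ2 _ _ xiX.
  have symP : forall u v, ~~ e (sz u) (sz v) /\ dist_le e [set: V] 5 (sz u) (sz v) ->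
                ~~ e (sz v) (sz u) /\ dist_le e [set: V] 5 (sz v) (sz u).
    by move=> u v [h1 h2]; split; [rewrite e_sym | apply: dl_sym].
  move: SZ (Hbf xi xiX); rewrite /f.
  case: (bf xi) => [|a [|c [|d [|? ?]]]] SZ [ub Cb sh] //.
  -
    subst xi.
    have mem : forall v, v \in C a -> v = a by move=> v; rewrite Cb inE => /eqP.
    have d2 : dist_le e [set: V] 2 a (nX a) by exact: (dxn 0 a (dl0 _ (in_setT _))).
    split.
    + move=> v vC; rewrite (mem _ vC) SZ ?F3' //; split => //.
      exact: dl_mono d2.
    + by rewrite SZ ?F3'.
    + by move=> u v /mem -> /mem ->; rewrite e_irr.
    + by move=> u uC; left; rewrite SZ.
    + by move=> u v /mem -> /mem ->.
  -
    case: sh => ax eac; subst xi.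
    move: (ub); rewrite /= inE andbT => ac.
    have aC : a \in C a by rewrite F3'.
    have cC : c \in C a by rewrite Cb !inE eqxx orbT.
    have sa : sz a = c by rewrite SZ // eqxx.
    have sc : sz c = nX a by rewrite SZ // eq_sym (negbTE ac).
    have ca : c != a by rewrite eq_sym.
    have cn : c != nX a by apply/negP => /eqP cn; rewrite -cn cC in nC.
    have mem : forall v, v \in C a -> v = a \/ v = c.
      by move=> v; rewrite Cb !inE => /orP[/eqP->|/eqP->]; [left|right].
    have d3 : dist_le e [set: V] 3 c (nX a) by apply: (dxn 1); rewrite e_sym in eac; exact: E1.
    split.
    + move=> v /mem [->|->]; [rewrite sa | rewrite sc].
        by split => //; [exact: deepT | apply: dl_mono (E1 _ _ eac)].
      by split => //; [rewrite eq_sym | exact: dl_mono d3].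
    + by rewrite sa; apply: dl_mono (E1 _ _ eac).
    + have P1 : ~~ e (sz a) (sz c) /\ dist_le e [set: V] 5 (sz a) (sz c).
        by rewrite sa sc; split; [exact: deepn | exact: dl_mono d3].
      move=> u v /mem [->|->] /mem [->|->]; rewrite ?e_irr //.
      by move=> _; apply: symP.
    + move=> u /mem [->|->]; last by left.
      by right; rewrite sa cC deepX.
    + move=> u v /mem [->|->] /mem [->|->] //; rewrite sa sc => h.
        by rewrite h eqxx in cn.
      by rewrite h eqxx in cn.
  -
    case: sh => ax eac ecd nad; subst xi.
    move: (ub); rewrite /= !inE !negb_or !andbT => /andP[/andP[ac ad] cd].
    have aC : a \in C a by rewrite F3'.
    have cC : c \in C a by rewrite Cb !inE eqxx orbT.
    have dC : d \in C a by rewrite Cb !inE eqxx !orbT.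
    have ca : c != a by rewrite eq_sym.
    have da : d != a by rewrite eq_sym.
    have sa : sz a = d by rewrite SZ // eqxx.
    have sd : sz d = c by rewrite SZ // eqxx (negbTE da).
    have sc : sz c = nX a by rewrite SZ // (negbTE ca) (negbTE cd).
    have cn : c != nX a by apply/negP => /eqP cn; rewrite -cn cC in nC.
    have dn : d != nX a by apply/negP => /eqP dn'; rewrite -dn' dC in nC.
    have mem : forall v, v \in C a -> [\/ v = a, v = c | v = d].
      by move=> v; rewrite Cb !inE => /or3P[/eqP->|/eqP->|/eqP->]; [apply: Or31|apply: Or32|apply: Or33].
    have eca : e c a by rewrite e_sym.
    have edc : e d c by rewrite e_sym.
    have d3 : dist_le e [set: V] 3 c (nX a) by apply: (dxn 1); exact: E1.
    have d4 : dist_le e [set: V] 4 d (nX a) by apply: (dxn 2); exact: (dl_trans (E1 _ _ edc) (E1 _ _ eca)).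
    split.
    + move=> v /mem [->|->|->]; [rewrite sa | rewrite sc | rewrite sd].
      * split => //; [exact: deepT | ].
        by apply: dl_mono (dl_trans (E1 _ _ eac) (E1 _ _ ecd)).
      * by split => //; [rewrite eq_sym | exact: dl_mono d3].
      * split; [exact: deepT | by [] | apply: dl_mono (E1 _ _ edc)] => //.
    + by rewrite sa; apply: (dl_trans (E1 _ _ eac) (E1 _ _ ecd)).
    + have P1 : ~~ e (sz a) (sz c) /\ dist_le e [set: V] 5 (sz a) (sz c).
        by rewrite sa sc; split; [exact: deepn | exact: dl_mono d4].
      have P2 : ~~ e (sz c) (sz d) /\ dist_le e [set: V] 5 (sz c) (sz d).
        rewrite sc sd; split; first by rewrite e_sym; exact: deepn.
        by apply: (dl_sym e_sym); apply: (dl_mono _ d3).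
      have nda : ~~ e d a by rewrite e_sym.
      move=> u v /mem [->|->|->] /mem [->|->|->]; rewrite ?e_irr ?(negbTE nad) ?(negbTE nda) //.
      * by move=> _; apply: symP.
      * by move=> _; apply: symP.
    + move=> u /mem [->|->|->]; [right | left | right].
      * by rewrite sa dC deepX.
      * by [].
      * by rewrite sd cC deepX.
    + have dc : d != c by rewrite eq_sym.
      have nc' : nX a != c by rewrite eq_sym.
      have nd' : nX a != d by rewrite eq_sym.
      move=> u v /mem [->|->|->] /mem [->|->|->] //; rewrite ?sa ?sc ?sd => /eqP;
        by rewrite ?(negbTE cn) ?(negbTE dn) ?(negbTE cd) ?(negbTE dc) ?(negbTE nc') ?(negbTE nd').
have edge_xX : forall xi, xi \in X ->
    ~~ e (sz x) (sz xi) /\ dist_le e [set: V] 5 (sz x) (sz xi).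
  move=> xi xiX; have [B1 B2 _ _ _] := BL _ xiX.
  have [nT _ _] := B1 _ (F3' xi).
  rewrite (SZ1 _ xT'); split.
    apply/negP => h; case: (F2 _ _ (sT' _ xT') h) => [|[sx _]].
      by rewrite (negbTE nT).
    by move: (sfp _ xT'); rewrite sx eqxx.
  exact: (dl_trans (dl_sym e_sym (dl_sub (subsetT _) Hx)) (dl_trans (E1 _ _ (HXnb _ xiX)) B2)).
have EC : forall a b, e a b -> ~~ e (sz a) (sz b) /\ dist_le e [set: V] 5 (sz a) (sz b).
  move=> a b ab; case: (F7 a) => [aT|[xi xiX aC]].
    case: (F2 _ _ aT ab) => [bT|[ax bX]]; last by rewrite ax; exact: edge_xX.
    have h : eA e T' a b by rewrite /eA aT bT ab.
    rewrite !SZ1 //; split; last exact: dl_sub (subsetT _) (s2 _ _ h).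
    by have := s1 _ _ h; rewrite /eA (sT' _ aT) (sT' _ bT).
  case: (F3 _ _ _ aC ab) => [bC|[axi bx]].
    by have [_ _ B3 _ _] := BL _ xiX; apply: B3.
  rewrite axi bx; have [h1 h2] := edge_xX _ xiX.
  by split; [rewrite e_sym | apply: dl_sym].
exists sz; split; last first.
- by move=> xi xiX; case: (BL _ xiX).
- by move=> v vT; apply: SZ1.
split => //.
- split.
  + by move=> v _; rewrite in_setT.
  + move=> u v _ _; case: (F7 u) => [uT|[xi xiX uC]]; case: (F7 v) => [vT|[xj xjX vC]].
    * by rewrite !SZ1 //; apply: sinj.
    * have [B1 _ _ _ _] := BL _ xjX; have [nT _ _] := B1 _ vC.
      by rewrite SZ1 // => h; move: nT; rewrite -h (sT' _ uT).
    * have [B1 _ _ _ _] := BL _ xiX; have [nT _ _] := B1 _ uC.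
      by rewrite (SZ1 v) // => h; move: nT; rewrite h (sT' _ vT).
    * move=> h.
      have [_ _ _ B4 B5] := BL _ xiX; have [_ _ _ B4' _] := BL _ xjX.
      suff exj : xi = xj by subst xj; apply: B5.
      case: (B4 _ uC) => [hu|[huC huX]]; case: (B4' _ vC) => [hv|[hvC hvX]].
      - by apply: NX3; rewrite -hu -hv.
      - by move: hvX; rewrite -h hu NX1.
      - by move: huX; rewrite h hv NX1.
      - by apply: (F6 _ _ (sz u)) => //; rewrite h.
  + move=> v _; case: (F7 v) => [vT|[xi xiX vC]]; first by rewrite SZ1 // sfp.
    by have [B1 _ _ _ _] := BL _ xiX; have [_ -> _] := B1 _ vC.
- split.
  + by move=> a b; rewrite !eAT => /EC[].
  + by move=> a b; rewrite eAT => /EC[].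
  + rewrite SZ1 //; case: s3 => d1 _; split; first exact: dl_sub (subsetT _) d1.
    move=> j; rewrite ltnS leqn0 => /eqP -> /dl0_eq h.
    by move: (sfp _ zT'); rewrite -h eqxx.
  + move=> y; rewrite eAT => zy; case: (F2 _ _ zT' zy) => [yT|[zx yX]].
      rewrite SZ1 //; apply: dl_sub (subsetT _) (s4 _ _).
      by rewrite /eA zT' yT zy.
    by have [_ B2 _ _ _] := BL _ yX.
  + move=> y _ dy; case: (F7 y) => [yT|[xi xiX yC]]; last first.
      by have [B1 _ _ _ _] := BL _ xiX; have [_ _ ?] := B1 _ yC.
    have yx : y != x by apply/negP => /eqP yx; move: Hn; rewrite -yx dy.
    have dd : deg e T' y = deg e [set: V] y.
      rewrite /deg; apply: eq_card => u; rewrite !inE eAT /eA yT /=.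
      case yu: (e y u); last by rewrite andbF.
      case: (F2 _ _ yT yu) => [-> //|[yx' _]].
      by rewrite yx' eqxx in yx.
    rewrite SZ1 //; apply: dl_sub (subsetT _) (s5 _ yT _).
    by rewrite dd.
Qed.
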